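(* Let $L$ be the infinite matrix with entries $L_{i,j}=l_{i,j}$ for $i\ge j\ge0$ and $L_{i,j}=0$ for $j>i$, let $M$ be the infinite matrix with entries $M_{i,j}=l_{i+j,j}$ ($i,j\ge0$), and let $U$ be the infinite upper-triangular matrix with entries $U_{i,j}=\binom{j}{i}$ ($i,j\geq0$). Then $M=LU$ (the product being well defined since each entry is a finite sum). In particular, for every $n\ge1$, the square matrix $M(n)$ formed by the first $n$ rows and columns of $M$ satisfies $\det M(n)=1$.
   Context: For $i,j\in\mathbb N$ with $j\le i$, $l_{i,j}=\sum_{k=0}^{i-j}\binom{\frac{i-1}{2}+x-k}{k}\binom{\frac{i-1}{2}+k-x}{i-j-k}$, where $\binom{z}{k}=\frac{z(z-1)\cdots(z-k+1)}{k!}$; this sum is a polynomial in $x$ which is constant in $x$, so $l_{i,j}$ is a well-defined number (e.g. its value at $x=0$). These numbers form a Pascal-like triangle starting with rows $1$; $-1,1$; $1,0,1$; $-1,1,1,1$; $1,0,2,2,1$. *)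

(* Defs.v *)
From mathcomp Require Import all_boot all_order all_algebra.
Set Implicit Arguments. Unset Strict Implicit. Unset Printing Implicit Defensive.
Import Order.TTheory GRing.Theory Num.Theory.
Local Open Scope ring_scope.

Definition gbinom (z : rat) (k : nat) : rat :=
  (\prod_(m < k) (z - m%:R)) / (k`!)%:R.

Definition lpoly (i j : nat) (x : rat) : rat :=
  \sum_(k < (i - j)%N.+1)
     gbinom ((i%:R - 1) / 2%:R + x - k%:R) k *
     gbinom ((i%:R - 1) / 2%:R + k%:R - x) (i - j - k)%N.

(* l_{i,j} (meaningful for j <= i): the value of the constant polynomial at x = 0. *)
Definition l (i j : nat) : rat := lpoly i j 0.

Definition Lmat (i j : nat) : rat := if (j <= i)%N then l i j else 0.
Definition Mmat (i j : nat) : rat := l (i + j) j.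
Definition Umat (i j : nat) : rat := ('C(j, i))%:R.

Definition lead_submx (A : nat -> nat -> rat) (n : nat) : 'M[rat]_n :=
  \matrix_(i < n, j < n) A i j.

(* Main.v *)
Require Import Defs.
From mathcomp Require Import all_boot all_order all_algebra.
From mathcomp Require Import ring.
Import Order.TTheory GRing.Theory Num.Theory.
Local Open Scope ring_scope.

Lemma gbinom0 z : gbinom z 0 = 1.
Proof. by rewrite /gbinom big_ord0 fact0 invr1 mulr1. Qed.

Lemma gbinomS z k : gbinom z k.+1 = gbinom (z - 1) k.+1 + gbinom (z - 1) k.
Proof.
rewrite /gbinom big_ord_recl big_ord_recr /=.
have -> : \big[*%R/1]_(i < k) (z - (bump 0 i)%:R)
    = \big[*%R/1]_(i < k) (z - 1 - i%:R).
  by apply: eq_bigr => i _; rewrite /bump /= add1n mulrS; ring.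
set P := \big[*%R/1]_(i < k) _.
have hk : (k`!)%:R != 0 :> rat by rewrite pnatr_eq0 -lt0n fact_gt0.
rewrite factS natrM mulrS.
have hk1 : 1 + k%:R != 0 :> rat by rewrite -mulrS pnatr_eq0.
field.
by rewrite hk1 hk.
Qed.
Definition S (u v : rat) (d : nat) : rat :=
  \sum_(k < d.+1) gbinom (u - k%:R) k * gbinom (v + k%:R) (d - k).

Lemma R2 u v d : S u v d.+1 = S u (v - 1) d.+1 + S u (v - 1) d.
Proof.
rewrite /S big_ord_recr [in X in _ = X + _]big_ord_recr /= !subnn !gbinom0.
have -> : \sum_(i < d.+1) gbinom (u - (widen_ord (leqnSn d.+1) i)%:R)
     (widen_ord (leqnSn d.+1) i) * gbinom (v + (widen_ord (leqnSn d.+1) i)%:R) (d.+1 - widen_ord (leqnSn d.+1) i)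
  = \sum_(i < d.+1) (gbinom (u - i%:R) i * gbinom (v - 1 + i%:R) (d.+1 - i)
        + gbinom (u - i%:R) i * gbinom (v - 1 + i%:R) (d - i)).
  apply: eq_bigr => i _ /=.
  have hi : (i <= d)%N by rewrite -ltnS.
  rewrite (subSn hi) gbinomS -mulrDr -(subSn hi).
  by congr (_ * (gbinom _ _ + gbinom _ _)); ring.
by rewrite big_split /=; ring.
Qed.

Lemma R1 u v d : S u v d.+1 = S (u - 1) v d.+1 + S (u - 2) (v + 1) d.
Proof.
rewrite /S big_ord_recl [in X in _ = X + _]big_ord_recl /= !subn0 !gbinom0.
have -> : \sum_(i < d.+1) gbinom (u - (bump 0 i)%:R) (bump 0 i) *
     gbinom (v + (bump 0 i)%:R) (d.+1 - bump 0 i)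
  = \sum_(i < d.+1) (gbinom (u - 1 - (bump 0 i)%:R) (bump 0 i) *
     gbinom (v + (bump 0 i)%:R) (d.+1 - bump 0 i)
     + gbinom (u - 2 - i%:R) i * gbinom (v + 1 + i%:R) (d - i)).
  apply: eq_bigr => i _ /=.
  rewrite /bump /= add1n subSS gbinomS mulrDl.
  congr (gbinom _ _ * _ + gbinom _ _ * gbinom _ _); rewrite mulrS; ring.
by rewrite big_split /= addrA.
Qed.

Lemma Sshift d : forall u v, S (u + 1) (v - 1) d = S u v d.
Proof.
elim: d => [|d IH] u v.
  by rewrite /S !big_ord1 /= !gbinom0.
rewrite (R1 (u + 1) (v - 1)) (R2 u v).
have -> : u + 1 - 1 = u by ring.
have -> : u + 1 - 2 = u - 1 by ring.
have -> : v - 1 + 1 = v by ring.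
rewrite -(IH (u - 1) v).
by have -> : u - 1 + 1 = u by ring.
Qed.
Definition cc (i : nat) : rat := (i%:R - 1) / 2%:R.

Lemma lpolyS i j x : lpoly i j x = S (cc i + x) (cc i - x) (i - j).
Proof.
rewrite /lpoly /S /cc; apply: eq_bigr => k _; congr (_ * gbinom _ _); ring.
Qed.

Lemma lpoly_shift i j x : lpoly i j (x + 1) = lpoly i j x.
Proof.
rewrite !lpolyS -(Sshift _ (cc i + x)); congr S; ring.
Qed.

Lemma lpoly_nat i j n : lpoly i j n%:R = lpoly i j 0.
Proof.
elim: n => [|n IH] //.
by rewrite -addn1 natrD lpoly_shift.
Qed.

Definition Pg (c s : rat) (k : nat) : {poly rat} :=
  (\prod_(m < k) (s *: 'X + (c - m%:R)%:P)) * ((k`!)%:R^-1)%:P.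

Lemma Pg_eval c s k x : (Pg c s k).[x] = gbinom (c + s * x) k.
Proof.
rewrite /Pg /gbinom hornerM horner_prod hornerC; congr (_ * _).
apply: eq_bigr => m _; rewrite hornerD hornerZ hornerX hornerC; ring.
Qed.

Lemma lpoly_poly i j : exists P : {poly rat}, forall x, P.[x] = lpoly i j x.
Proof.
exists (\sum_(k < (i - j)%N.+1)
   Pg (cc i - k%:R) 1 k * Pg (cc i + k%:R) (-1) (i - j - k)).
move=> x; rewrite horner_sum /lpoly; apply: eq_bigr => k _.
rewrite hornerM !Pg_eval /cc; congr (gbinom _ _ * gbinom _ _); ring.
Qed.

Lemma lpoly_const i j x : lpoly i j x = lpoly i j 0.
Proof.
have [P HP] := lpoly_poly i j.
set Q := P - (lpoly i j 0)%:P.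
have HQ : forall n : nat, root Q n%:R.
  by move=> n; rewrite /root /Q hornerD hornerN hornerC HP lpoly_nat subrr.
have Q0 : Q = 0.
  apply/eqP; apply/negPn/negP => nz.
  have : (size [seq (n%:R : rat) | n <- iota 0 (size Q)] < size Q)%N.
    apply: max_poly_roots nz _ _.
      by apply/allP => y /mapP [n _ ->]; apply: HQ.
    rewrite map_inj_uniq ?iota_uniq //.
    by move=> a b /eqP; rewrite eqr_nat => /eqP.
  by rewrite size_map size_iota ltnn.
have := congr1 (fun p => p.[x]) Q0.
rewrite /Q hornerD hornerN hornerC HP horner0 => /eqP.
by rewrite subr_eq0 => /eqP.
Qed.
From mathcomp Require Import zify.

Lemma lpascal n j : (j < n)%N -> l n.+1 j.+1 = l n j + l n j.+1.
Proof.
move=> hj.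
have e : (n - j = (n - j.+1).+1)%N by lia.
rewrite /l -(lpoly_const n j (1 / 2)) -(lpoly_const n j.+1 (1 / 2)) !lpolyS subSS e R2.
have hn : n.+1%:R = n%:R + 1 :> rat by rewrite -addn1 natrD.
have -> : cc n + 1 / 2 = cc n.+1 + 0 by rewrite /cc hn; field.
have -> : cc n - 1 / 2 = cc n.+1 - 0 - 1 by rewrite /cc hn; field.
by [].
Qed.

Lemma lnn n : l n n = 1.
Proof. by rewrite /l /lpoly subnn big_ord1 /= !gbinom0 mulr1. Qed.

Lemma LmatS n j : Lmat n.+1 j.+1 = Lmat n j + Lmat n j.+1.
Proof.
rewrite /Lmat ltnS.
case: (ltngtP j n) => h.
- by rewrite lpascal.
- by rewrite addr0.
- by rewrite h !lnn addr0.
Qed.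
Lemma Lexp m : forall i e,
  Lmat (i + m) (e + m) = \sum_(k < m.+1) ('C(m, k))%:R * Lmat i (e + k).
Proof.
elim: m => [|m IH] i e.
  by rewrite big_ord1 /= !addn0 bin0 mul1r.
rewrite !addnS LmatS IH -addSn IH.
rewrite big_ord_recl [in X in _ = X]big_ord_recl /= !bin0 !addn0.
have E : forall k : 'I_m.+1, ('C(m.+1, bump 0 k))%:R * Lmat i (e + bump 0 k)
   = ('C(m, k.+1))%:R * Lmat i (e + k.+1) + ('C(m, k))%:R * Lmat i (e.+1 + k) :> rat.
  by move=> k; rewrite /bump /= add1n binS natrD mulrDl addSn addnS.
rewrite (eq_bigr _ (fun k _ => E k)) big_split /=.
rewrite [X in _ = _ + (X + _)]big_ord_recr /= bin_small // mul0r addr0.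
have -> : \sum_(i0 < m) ('C(m, bump 0 i0))%:R * Lmat i (e + bump 0 i0)
   = \sum_(i0 < m) ('C(m, i0.+1))%:R * Lmat i (e + i0.+1) :> rat.
  by apply: eq_bigr => k _; rewrite /bump /= add1n.
by rewrite addrA.
Qed.
Lemma sum_widen (F : nat -> rat) n N : (n <= N)%N ->
  (forall k, (n <= k)%N -> (k < N)%N -> F k = 0) ->
  \sum_(k < n) F k = \sum_(k < N) F k.
Proof.
move=> hN H.
rewrite -!(big_mkord xpredT) (@big_cat_nat _ _ _ n 0 N _ _ (leq0n n) hN) /=.
rewrite [X in _ = _ + X]big_nat_cond [X in _ = _ + X]big1 ?addr0 //.
by move=> k /andP [/andP [h1 h2] _]; apply: H.
Qed.

Lemma part1 i j : Mmat i j = \sum_(k < i.+1) Lmat i k * Umat k j.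
Proof.
have e1 : Mmat i j = Lmat (i + j) (0 + j) by rewrite /Mmat /Lmat add0n leq_addl.
rewrite e1 Lexp.
rewrite (sum_widen (fun k => ('C(j, k))%:R * Lmat i (0 + k)) _ (i + j).+1); last 2 first.
- by rewrite ltnS leq_addl.
- by move=> k hk _; rewrite bin_small // mul0r.
rewrite (sum_widen (fun k => Lmat i k * Umat k j) _ (i + j).+1); last 2 first.
- by rewrite ltnS leq_addr.
- by move=> k hk _; rewrite /Lmat leqNgt hk mul0r.
by apply: eq_big => // k _; rewrite add0n mulrC.
Qed.

Theorem proposition4p5 :
  (forall i j : nat,
      Mmat i j = \sum_(k < i.+1) Lmat i k * Umat k j) /\
  (forall n : nat, (1 <= n)%N -> \det (lead_submx Mmat n) = 1).
Proof.
split; first exact: part1.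
move=> n _.
have -> : lead_submx Mmat n = lead_submx Lmat n *m lead_submx Umat n.
  apply/matrixP => i j; rewrite !mxE part1.
  rewrite (sum_widen (fun k => Lmat i k * Umat k j) _ n); last 2 first.
  - exact: ltn_ord.
  - by move=> k hk _; rewrite /Lmat leqNgt hk mul0r.
  by apply: eq_bigr => k _; rewrite !mxE.
rewrite det_mulmx -(det_tr (lead_submx Umat n)) !det_trig.
- rewrite !big1 ?mulr1 // => k _; rewrite !mxE.
    by rewrite /Umat binn.
  by rewrite /Lmat leqnn lnn.
- apply/is_trig_mxP => i j hij; rewrite !mxE /Umat bin_small //.
- apply/is_trig_mxP => i j hij; rewrite !mxE /Lmat leqNgt hij //.
Qed.
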